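(* Fix a finite set $T$ of tuples $(q_1,\dots,q_m,r;p_1,\dots,p_k,t)$ of variables. The following three extensions of $\mathbf{L}^*(/)$ (each including the cut rule) derive exactly the same sequents: (1) $\mathbf{L}^*(/)$ extended with the B-rules for all tuples in $T$; (2) $\mathbf{L}^*(/)$ extended with the $\mathrm{B}'$-rules for all tuples in $T$; (3) $\mathbf{L}^*(/)$ extended with the B-axioms for all tuples in $T$.
   Context: $\mathbf{L}^*(/)$ is the one-division Lambek calculus: formulae are built from variables using only $/$; sequents are $\Pi\to A$ with $\Pi$ a finite (possibly empty, $\Lambda$) sequence of formulae; axioms $A\to A$; rules ($/L$) from $\Pi\to A$ and $\Delta_1,B,\Delta_2\to C$ infer $\Delta_1,B/A,\Pi,\Delta_2\to C$; ($/R$) from $\Pi,A\to B$ infer $\Pi\to B/A$; (cut) from $\Pi\to A$ and $\Delta_1,A,\Delta_2\to C$ infer $\Delta_1,\Pi,\Delta_2\to C$. For a tuple $(q_1,\dots,q_m,r;p_1,\dots,p_k,t)$ of concrete variables: the B-rule is: from $\Delta,q_1,\dots,q_m\to r$ infer $p_1,\dots,p_k,\Delta\to t$ (for arbitrary sequences $\Delta$ of formulae); the $\mathrm{B}'$-rule is: from $\Pi_1\to p_1$, ..., $\Pi_k\to p_k$ and $\Delta,q_1,\dots,q_m\to r$ infer $\Pi_1,\dots,\Pi_k,\Delta\to t$; the B-axiom is $\Lambda\to (t/(r/q_1\ldots q_m))/p_1\ldots p_k$, where $E/F_1\ldots F_n$ abbreviates $(\ldots((E/F_n)/F_{n-1})\ldots)/F_1$.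 *)

(* Defs.v *)
From Stdlib Require Import List.
Import ListNotations.

(* Formulae built from variables (indexed by nat) using only "/".
   [Div B A] is the formula B / A. *)
Inductive form : Type :=
| Var : nat -> form
| Div : form -> form -> form.

(* E / F_1 ... F_n  :=  (...((E / F_n) / F_{n-1}) ...) / F_1 *)
Fixpoint divs (E : form) (Fs : list form) : form :=
  match Fs with
  | [] => E
  | F :: Fs' => Div (divs E Fs') F
  end.

Record btuple : Type := BTuple {
  tq : list nat;
  tr : nat;
  tp : list nat;
  tt : nat
}.

(* The B-axiom formula  (t / (r / q_1 ... q_m)) / p_1 ... p_k *)
Definition baxiom_formula (u : btuple) : form :=
  divs (Div (Var (tt u)) (divs (Var (tr u)) (map Var (tq u)))) (map Var (tp u)).

Inductive ext_mode : Type := ModeB | ModeB' | ModeAx.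

Inductive der (T : list btuple) (md : ext_mode) : list form -> form -> Prop :=
| d_ax A : der T md [A] A
| d_divL Pi A D1 B D2 C :
    der T md Pi A -> der T md (D1 ++ B :: D2) C ->
    der T md (D1 ++ Div B A :: Pi ++ D2) C
| d_divR Pi A B :
    der T md (Pi ++ [A]) B -> der T md Pi (Div B A)
| d_cut Pi A D1 D2 C :
    der T md Pi A -> der T md (D1 ++ A :: D2) C ->
    der T md (D1 ++ Pi ++ D2) C
| d_B u D :
    md = ModeB -> In u T ->
    der T md (D ++ map Var (tq u)) (Var (tr u)) ->
    der T md (map Var (tp u) ++ D) (Var (tt u))
| d_B' u (Pis : list (list form)) D :
    md = ModeB' -> In u T ->
    length Pis = length (tp u) ->
    (forall i, i < length (tp u) ->
       der T md (nth i Pis []) (Var (nth i (tp u) 0))) ->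
    der T md (D ++ map Var (tq u)) (Var (tr u)) ->
    der T md (concat Pis ++ D) (Var (tt u))
| d_Bax u :
    md = ModeAx -> In u T ->
    der T md [] (baxiom_formula u).

(* Main.v *)
Require Import Defs.
From Stdlib Require Import List.
Import ListNotations.

Section S.
Variable T : list btuple.

Lemma divs_inv md E Fs : der T md ([divs E Fs] ++ Fs) E.
Proof.
  induction Fs as [|F Fs IH]; simpl.
  - apply d_ax.
  - pose proof (d_divL T md [F] F [] (divs E Fs) Fs E (d_ax T md F) IH) as H.
    simpl in H. exact H.
Qed.

Lemma divs_R md E Fs : forall L, der T md (L ++ Fs) E -> der T md L (divs E Fs).
Proof.
  induction Fs as [|F Fs IH]; intros L H; simpl.
  - rewrite app_nil_r in H. exact H.
  - apply d_divR. apply IH. rewrite <- app_assoc. exact H.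
Qed.

Lemma multicut md ps : forall Pis L D C,
  length Pis = length ps ->
  (forall i, i < length ps -> der T md (nth i Pis []) (Var (nth i ps 0))) ->
  der T md (L ++ map Var ps ++ D) C ->
  der T md (L ++ concat Pis ++ D) C.
Proof.
  induction ps as [|p ps IH]; intros Pis L D C Hl Hi H.
  - destruct Pis; [|discriminate]. exact H.
  - destruct Pis as [|P Pis]; [discriminate|]. simpl in *.
    injection Hl as Hl.
    pose proof (d_cut T md P (Var p) L (map Var ps ++ D) C (Hi 0 ltac:(apply PeanoNat.Nat.lt_0_succ)) H) as H1.
    rewrite <- app_assoc.
    replace (L ++ P ++ concat Pis ++ D) with ((L ++ P) ++ concat Pis ++ D)
      by (rewrite <- app_assoc; reflexivity).
    apply IH; auto.
    + intros i Hi'. apply (Hi (S i)). apply PeanoNat.Nat.succ_lt_mono in Hi'. exact Hi'.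
    + rewrite <- app_assoc. exact H1.
Qed.

Lemma B_B' Pi A : der T ModeB Pi A -> der T ModeB' Pi A.
Proof.
  induction 1; try discriminate.
  - apply d_ax.
  - apply d_divL; auto.
  - apply d_divR; auto.
  - eapply d_cut; eauto.
  - assert (E : map Var (tp u) = concat (map (fun p => [Var p]) (tp u))).
    { clear. induction (tp u); simpl; f_equal; auto. }
    rewrite E. apply d_B'; auto.
    + apply length_map.
    + intros i Hi.
      rewrite (nth_indep _ [] ((fun p => [Var p]) 0)) by (rewrite length_map; auto).
      rewrite (map_nth (fun p => [Var p])). apply d_ax.
Qed.

Lemma B'_B Pi A : der T ModeB' Pi A -> der T ModeB Pi A.
Proof.
  induction 1; try discriminate.
  - apply d_ax.
  - apply d_divL; auto.
  - apply d_divR; auto.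
  - eapply d_cut; eauto.
  - apply (multicut ModeB (tp u) Pis [] D); auto.
    simpl. apply d_B; auto.
Qed.

Lemma B_Ax Pi A : der T ModeB Pi A -> der T ModeAx Pi A.
Proof.
  induction 1; try discriminate.
  - apply d_ax.
  - apply d_divL; auto.
  - apply d_divR; auto.
  - eapply d_cut; eauto.
  - set (R := divs (Var (tr u)) (map Var (tq u))).
    assert (HR : der T ModeAx D R) by (apply divs_R; auto).
    assert (K1 : der T ModeAx (map Var (tp u)) (Div (Var (tt u)) R)).
    { pose proof (d_cut T ModeAx [] _ [] (map Var (tp u)) _ (d_Bax T ModeAx u eq_refl H0)
        (divs_inv ModeAx (Div (Var (tt u)) R) (map Var (tp u)))) as X.
      simpl in X. exact X. }
    pose proof (d_divL T ModeAx D R [] (Var (tt u)) [] (Var (tt u)) HR (d_ax _ _ _)) as K2.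
    simpl in K2. rewrite app_nil_r in K2.
    pose proof (d_cut T ModeAx _ _ [] D _ K1 K2) as K3. simpl in K3. exact K3.
Qed.

Lemma Ax_B Pi A : der T ModeAx Pi A -> der T ModeB Pi A.
Proof.
  induction 1; try discriminate.
  - apply d_ax.
  - apply d_divL; auto.
  - apply d_divR; auto.
  - eapply d_cut; eauto.
  - unfold baxiom_formula. apply divs_R. simpl. apply d_divR.
    apply d_B; auto. apply (divs_inv ModeB).
Qed.

End S.

Theorem lemma3 (T : list btuple) (Pi : list form) (A : form) :
  (der T ModeB Pi A <-> der T ModeB' Pi A) /\
  (der T ModeB' Pi A <-> der T ModeAx Pi A).
Proof.
  split; split; intro H.
  - apply B_B'; auto.
  - apply B'_B; auto.
  - apply B_Ax, B'_B; auto.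
  - apply B_B', Ax_B; auto.
Qed.
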